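(* Let $u=q/p$ and $v=s/r$ be positive rational numbers written in lowest terms, and let $\mathcal{T}_{u,v}$ be the triangle with vertices $(0,0)$, $(p/q,0)$ and $(0,r/s)$. If \[ s\mid p,\quad p\mid (rq+1),\quad \gcd\!\left(\frac{rq+1}{p},s\right)=1 \] and \[ q\mid r,\quad r\mid (sp+1),\quad \gcd\!\left(\frac{sp+1}{r},q\right)=1, \] then $\mathcal{T}_{u,v}$ is pseudo-integral, i.e. $t\mapsto \#(t\mathcal{T}_{u,v}\cap\mathbb{Z}^2)$ is a polynomial in the positive integer $t$. *)

(* Defs.v *)
From mathcomp Require Import all_boot all_order all_algebra.
Set Implicit Arguments. Unset Strict Implicit. Unset Printing Implicit Defensive.
Import Order.TTheory GRing.Theory Num.Theory.
Local Open Scope ring_scope.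

(* The closed triangle T_{u,v} with vertices (0,0), (1/u,0), (0,1/v),
   written as the intersection of its three half-planes:
   x >= 0, y >= 0, u x + v y <= 1. *)
Definition in_triangle (u v : rat) (x y : rat) : bool :=
  [&& 0 <= x, 0 <= y & x * u + y * v <= 1].

(* For t > 0, z in t T iff z / t in T. *)
Definition in_dilate (u v : rat) (t : nat) (x y : rat) : bool :=
  in_triangle u v (x / t%:R) (y / t%:R).

(* #(t T_{u,v} ∩ Z^2), for u = q/p and v = s/r with p, r > 0.
   Every lattice point of t T has 0 <= x <= t p / q <= t p and
   0 <= y <= t r / s <= t r (q, s >= 1), so enumerating the integer
   points with 0 <= x <= t p, 0 <= y <= t r is exhaustive. *)
Definition lattice_count (p q r s t : nat) : nat :=
  (\sum_(x < (t * p).+1) \sum_(y < (t * r).+1)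
     in_dilate (q%:R / p%:R) (s%:R / r%:R) t (x%:R) (y%:R))%N.

Definition pseudo_integral (p q r s : nat) : Prop :=
  exists P : {poly rat}, forall t : nat, (0 < t)%N ->
    (lattice_count p q r s t)%:R = P.[t%:R].

(* Main.v *)
Require Import Defs.
From mathcomp Require Import all_boot all_order all_algebra zify ring lra.
Set Implicit Arguments. Unset Strict Implicit. Unset Printing Implicit Defensive.
Import Order.TTheory GRing.Theory Num.Theory.

Lemma cnt1 (K v : nat) : (\sum_(i < K) (i == v :> nat) = (v < K))%N.
Proof.
elim: K => [|K IH]; first by rewrite big_ord0.
rewrite big_ord_recr /= IH ltnS [(v <= K)]leq_eqVlt.
by case: (ltngtP v K).
Qed.

Lemma sum_id2 (n : nat) : (2 * \sum_(i < n) i = n * n.-1)%N.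
Proof.
elim: n => [|n IH]; first by rewrite big_ord0.
rewrite big_ord_recr /= mulnDr IH; case: n {IH} => //= n; lia.
Qed.

Lemma mod_cancel (a b x y : nat) : coprime a b ->
  (a * x == a * y %[mod b]) = (x == y %[mod b]).
Proof.
move=> cab.
wlog le: x y / y <= x.
  move=> H; case: (leqP y x) => [|/ltnW h]; first exact: H.
  by rewrite eq_sym H // eq_sym.
rewrite !eqn_mod_dvd ?leq_mul2l ?le ?orbT // -mulnBr Gauss_dvdr //.
by rewrite coprime_sym.
Qed.

Lemma sum_perm_mod (s c d : nat) : (0 < s)%N -> coprime d s ->
  (\sum_(e < s) ((c + d * e) %% s) = \sum_(e < s) e)%N.
Proof.
move=> s0 cds.
pose h (i : 'I_s) : 'I_s := Ordinal (ltn_pmod (c + d * i) s0).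
have hinj : injective h.
  move=> i j /(congr1 val) /= /eqP.
  rewrite eqn_modDl mod_cancel // !modn_small //.
  move=> H; apply: val_inj; exact/eqP.
by rewrite [RHS](reindex_inj hinj).
Qed.

Lemma sum_period (f : nat -> nat) (s a : nat) : (forall e, f (s + e) = f e) ->
  (\sum_(e < a * s) f e = a * \sum_(e < s) f e)%N.
Proof.
move=> per; elim: a => [|a IH]; first by rewrite mul0n big_ord0.
rewrite mulSn big_split_ord /= [in RHS]mulSn -IH; congr (_ + _).
by apply: eq_bigr => i _; rewrite per.
Qed.

Lemma cntmod (b X K : nat) : (X < b)%N ->
  (\sum_(x < K) (x %% b == X) = (K + b.-1 - X) %/ b)%N.
Proof.
move=> Xb; have b0 : (0 < b)%N by case: b Xb.
elim: K => [|K IH].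
  by rewrite big_ord0 add0n divn_small // ltn_subLR; lia.
rewrite big_ord_recr /= IH.
have -> : (K.+1 + b.-1 - X = (K + b.-1 - X).+1)%N by lia.
rewrite divnS // addnC; congr (_ + _).
have -> : ((K + b.-1 - X).+1 = K + (b - X))%N by lia.
rewrite /dvdn -(modn_small Xb) -/(K == X %[mod b]).
rewrite -(eqn_modDr (b - X)) subnKC ?(ltnW Xb) // modnn (modn_small Xb).
by [].
Qed.

Lemma cntmod_le (b X K m : nat) : (X < b)%N -> (m < K)%N ->
  (\sum_(x < K) ((x <= m) && (x %% b == X)) = (m + b - X) %/ b)%N.
Proof.
move=> Xb mK; have b0 : (0 < b)%N by case: b Xb.
have := cntmod m.+1 Xb.
rewrite (big_ord_widen _ (fun x => (x %% b == X) : nat) mK) big_mkcond /=.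
have -> : (m.+1 + b.-1 - X = m + b - X)%N by lia.
move=> <-; apply: eq_bigr => i _; rewrite ltnS.
by case: (i <= m).
Qed.

Lemma pern (al be n X Y : nat) : (0 < al)%N -> (0 < be)%N -> coprime al be ->
  (X < be)%N -> (al * X = n %[mod be])%N -> (Y < al)%N -> (be * Y = n %[mod al])%N ->
  (al * be * ((n %/ al + be - X) %/ be) + al * X + be * Y = n + al * be)%N.
Proof.
move=> a0 b0 cab Xb HX Ya HY.
set m := n %/ al; set rho := n %% al; set w := (m + be - X)%N.
set C := w %/ be; set sg := w %% be.
have E1 : n = (m * al + rho)%N by rewrite /m /rho -divn_eq.
have E2 : w = (C * be + sg)%N by rewrite /C /sg -divn_eq.
have E3 : (al * w + al * X = al * m + al * be)%N by rewrite -!mulnDr /w; congr (_ * _); lia.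
have E4 : (al * w = al * be * C + al * sg)%N by rewrite E2 mulnDr [C * be]mulnC mulnA.
have key : (rho + al * sg + al * X + al * be * C = n + al * be)%N by lia.
have rlt : (rho < al)%N by rewrite ltn_mod.
have slt : (sg < be)%N by rewrite ltn_mod.
have Hb : (rho + al * sg = be * Y)%N.
  have l1 : (rho + al * sg < al * be)%N.
    have : (al * sg <= al * be.-1)%N by rewrite leq_mul2l; lia.
    have : (al * be.-1 + al = al * be)%N by rewrite -mulnSr prednK.
    lia.
  have l2 : (be * Y < al * be)%N by rewrite mulnC ltn_mul2r Ya b0.
  rewrite -(modn_small l1) -(modn_small l2); apply/eqP.
  rewrite chinese_remainder //; apply/andP; split.
    by rewrite HY addnC mulnC modnMDl /rho modn_mod.
  have h2 : ((al * X + al * be * C) = n %[mod be])%N.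
    by rewrite -modnDmr (mulnAC al be C) modnMl addn0.
  have h1 : (rho + al * sg + n == 0 + n %[mod be])%N.
    rewrite add0n; apply/eqP.
    rewrite -[in LHS]modnDmr -[in LHS]h2 [in LHS]modnDmr addnA key.
    by rewrite -modnDmr modnMl addn0.
  by rewrite eqn_modDr mod0n in h1; rewrite modnMr.
lia.
Qed.

Definition Xd (P S k n : nat) : nat :=
  ((P - n %% P) %% P + P * ((S.-1 * ((0 < n %% P) + n %/ P + k * (n %% P))) %% S))%N.

Lemma Xd_lt P S k n : (0 < P)%N -> (0 < S)%N -> (Xd P S k n < S * P)%N.
Proof.
move=> P0 S0; rewrite /Xd.
set e := ((P - _) %% P)%N; set j := (_ %% S)%N.
have : (e < P)%N by rewrite ltn_mod.
have : (j < S)%N by rewrite ltn_mod.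
move=> hj he.
have : (P * j <= P * S.-1)%N by rewrite leq_mul2l; lia.
have : (P * S.-1 + P = S * P)%N by rewrite -mulnSr prednK // mulnC.
lia.
Qed.

Local Open Scope ring_scope.
Lemma key_nat (al e e' i m n z j w a k P S : nat) :
  (al + 1 = k * P -> e' + e = P * i -> n = m * P + e -> j + S * w = z ->
  z + (i + m + k * e) = S * (i + m + k * e) -> P = a * S ->
  al * (e' + P * j) + S * P * (i + m + k * e) = n + S * P * (k * a * i + k * a * j + w))%N.
Proof.
move=> h1 h2 h3 h4 h5 h6.
apply/eqP; rewrite -eqz_nat; apply/eqP; rewrite !(PoszD, PoszM).
move/(congr1 Posz): h1; rewrite !(PoszD, PoszM) => h1.
move/(congr1 Posz): h2; rewrite !(PoszD, PoszM) => h2.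
move/(congr1 Posz): h3; rewrite !(PoszD, PoszM) => h3.
move/(congr1 Posz): h4; rewrite !(PoszD, PoszM) => h4.
move/(congr1 Posz): h5; rewrite !(PoszD, PoszM) => h5.
move/(congr1 Posz): h6; rewrite !(PoszD, PoszM) => h6.
have -> : al%:Z = (k%:Z * P%:Z - 1)%R by lia.
have -> : e'%:Z = (P%:Z * i%:Z - e%:Z)%R by lia.
have -> : j%:Z = (z%:Z - S%:Z * w%:Z)%R by lia.
have -> : z%:Z = (S%:Z * (i%:Z + m%:Z + k%:Z * e%:Z) - (i%:Z + m%:Z + k%:Z * e%:Z))%R by lia.
rewrite h3 h6; ring.
Qed.
Local Close Scope ring_scope.

Lemma Xd_cong P Q R S k n : (0 < P)%N -> (0 < S)%N -> (S %| P)%N ->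
  (Q * R + 1 = k * P)%N -> (Q * R * Xd P S k n = n %[mod S * P])%N.
Proof.
move=> P0 S0 SP hk; rewrite /Xd.
set e := (n %% P)%N; set m := (n %/ P)%N; set i := (0 < e)%N.
set e' := ((P - e) %% P)%N; set z := (S.-1 * (i + m + k * e))%N.
set j := (z %% S)%N; set w := (z %/ S)%N; set a := (P %/ S)%N.
have elt : (e < P)%N by rewrite ltn_mod.
have h2 : (e' + e = P * i)%N.
  rewrite /e' /i; case: (posnP e) => [->|ep]; first by rewrite subn0 modnn muln0.
  have -> : ((P - e) %% P = P - e)%N by rewrite modn_small; lia.
  by rewrite muln1 subnK // ltnW.
have h3 : n = (m * P + e)%N by rewrite /m /e -divn_eq.
have h4 : (j + S * w = z)%N by rewrite /j /w addnC mulnC -divn_eq.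
have h5 : (z + (i + m + k * e) = S * (i + m + k * e))%N.
  by rewrite /z [LHS]addnC -mulSn prednK.
have h6 : P = (a * S)%N by rewrite /a divnK.
have T : (Q * R * (e' + P * j) + S * P * (i + m + k * e) =
          n + S * P * (k * a * i + k * a * j + w))%N.
  exact: (key_nat hk h2 h3 h4 h5 h6).
have := congr1 (fun x => x %% (S * P))%N T => /=.
by rewrite addnC [(S * P * _)%N]mulnC modnMDl [(n + _)%N]addnC [(S * P * _)%N]mulnC modnMDl.
Qed.

Lemma sum_period' (f : nat -> nat) (s a n : nat) : n = (a * s)%N ->
  (forall e, f (s + e) = f e) ->
  (\sum_(e < n) f e = a * \sum_(e < s) f e)%N.
Proof. by move=> ->; apply: sum_period. Qed.

Definition J (S x : nat) := ((S.-1 * x) %% S)%N.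

Lemma block P S k m : (0 < P)%N -> (0 < S)%N -> (S %| P)%N -> coprime k S ->
  (2 * \sum_(e < P) Xd P S k (m * P + e) + 2 * P * J S m.+1 =
   P * P.-1 + P * (P * S.-1) + 2 * P * J S m)%N.
Proof.
move=> P0 S0 SP cks.
set g := fun e : nat => ((S.-1 * ((0 < e) + m + k * e)) %% S)%N.
set h := fun e : nat => ((S.-1 * (1 + m + k * e)) %% S)%N.
have -> : (\sum_(e < P) Xd P S k (m * P + e) =
    \sum_(e < P) ((P + P.-1 * e) %% P) + P * \sum_(e < P) g e)%N.
  rewrite big_distrr -big_split /=; apply: eq_bigr => e _.
  rewrite /Xd modnMDl (modn_small (ltn_ord e)) divnMDl // divn_small // addn0.
  congr (_ + _); apply/eqP.
  rewrite -(eqn_modDr e) subnK ?(ltnW (ltn_ord e)) // -addnA.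
  rewrite -[(P.-1 * e + e)%N]mulSnr prednK // modnn.
  by rewrite -modnDml modnn add0n modnMr.
rewrite sum_perm_mod // ?coprimePn //.
have A : (2 * \sum_(e < P) e = P * P.-1)%N by rewrite sum_id2.
have B : (2 * \sum_(e < S) e = S * S.-1)%N by rewrite sum_id2.
have ha : P = (P %/ S * S)%N by rewrite divnK.
have Hh : (\sum_(e < P) h e = P %/ S * \sum_(e < S) e)%N.
  rewrite (@sum_period' h S (P %/ S) P ha).
    congr (_ * _); rewrite -(sum_perm_mod (S.-1 * (1 + m)) S0 (_ : coprime (S.-1 * k) S)).
      by apply: eq_bigr => e _; rewrite /h !mulnDr mulnA.
    by rewrite coprimeMl coprimePn.
  move=> e; rewrite /h.
  have -> : (S.-1 * (1 + m + k * (S + e)) = (S.-1 * k) * S + S.-1 * (1 + m + k * e))%N by ring.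
  by rewrite modnMDl.
have Hg : (\sum_(e < P) g e + J S m.+1 = P %/ S * \sum_(e < S) e + J S m)%N.
  rewrite -Hh; case: P P0 {A ha Hh SP} => // P' _.
  rewrite !big_ord_recl /= /g /h /J muln0 !addn0 add0n add1n addnAC.
  lia.
rewrite mulnDr A -addnA.
have -> : (2 * (P * \sum_(e < P) g e) + 2 * P * J S m.+1 =
          2 * P * (\sum_(e < P) g e + J S m.+1))%N by ring.
rewrite Hg.
move: B ha; set a := (P %/ S)%N; set sS := (\sum_(e < S) e)%N; move=> B ha.
nia.
Qed.

Lemma sumX P S k T : (0 < P)%N -> (0 < S)%N -> (S %| P)%N -> coprime k S ->
  (2 * \sum_(n < (T * P).+1) Xd P S k n = T * P * (P * S).-1)%N.
Proof.
move=> P0 S0 SP cks.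
have IH : forall T, (2 * \sum_(n < T * P) Xd P S k n + 2 * P * J S T =
                     T * (P * P.-1 + P * (P * S.-1)))%N.
  elim=> [|T0 IH]; first by rewrite mul0n big_ord0 /J !muln0 ?mod0n ?muln0.
  rewrite [(T0.+1 * P)%N]mulSnr big_split_ord /=.
  have Bk := block T0 P0 S0 SP cks.
  rewrite [(T0.+1 * _)%N]mulSn.
  move: IH Bk; set A := (\sum_(i < T0 * P) _)%N; set B := (\sum_(i < P) _)%N.
  set C0 := (2 * P * J S T0)%N; set C1 := (2 * P * J S T0.+1)%N.
  set K := (P * P.-1 + P * (P * S.-1))%N; set TK := (T0 * K)%N; lia.
rewrite big_ord_recr /=.
have -> : Xd P S k (T * P) = (P * J S T)%N.
  by rewrite /Xd modnMl mulnK // subn0 modnn /J muln0 !addn0 add0n.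
have := IH T.
case: P P0 {SP IH} => // P' _; case: S S0 {cks} => // S' _ /=.
nia.
Qed.

Lemma dil_eq (p q r s t x y : nat) : (0 < p)%N -> (0 < r)%N -> (0 < t)%N ->
  in_dilate (q%:R / p%:R) (s%:R / r%:R) t x%:R y%:R =
  (q * r * x + s * p * y <= t * (p * r))%N.
Proof.
move=> p0 r0 t0; rewrite /in_dilate /in_triangle.
have tR : (0 < t%:R :> rat)%R by rewrite ltr0n.
rewrite !divr_ge0 ?ler0n //=.
have -> : (x%:R / t%:R * (q%:R / p%:R) + y%:R / t%:R * (s%:R / r%:R) =
   (q * r * x + s * p * y)%:R / (t * (p * r))%:R :> rat)%R.
  rewrite !natrD !natrM; field.
  by rewrite !pnatr_eq0 -!lt0n p0 r0 t0.
by rewrite ler_pdivrMr ?ltr0n ?muln_gt0 ?p0 ?r0 ?t0 // mul1r ler_nat.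
Qed.

Lemma inner_y (be c n K : nat) : (0 < be)%N ->
  (forall y, (c + be * y)%N = n -> (y < K)%N) ->
  (\sum_(y < K) (n == c + be * y)%N = ((c <= n) && (be %| n - c)))%N.
Proof.
move=> b0 HK.
case: (boolP ((c <= n) && (be %| n - c))) => [/andP [cn dv] | H].
  set y0 := ((n - c) %/ be)%N.
  have e0 : (c + be * y0 = n)%N by rewrite /y0 mulnC divnK // subnKC.
  have eq : forall y : nat, (n == c + be * y) = (y == y0).
    by move=> y; rewrite -{1}e0 eqn_add2l eqn_pmul2l.
  rewrite (eq_bigr (fun y : 'I_K => (y == y0 :> nat) : nat)); last by move=> y _; rewrite eq.
  by rewrite cnt1 (HK _ e0).
rewrite big1 // => y _; apply/eqP; rewrite eqb0; apply/negP => /eqP ey.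
move: H; rewrite ey leq_addr /= addnC addnK.
by rewrite dvdn_mulr.
Qed.

Lemma cond_eq (al be n x X : nat) : (0 < al)%N -> coprime al be -> (X < be)%N ->
  (al * X = n %[mod be])%N ->
  ((al * x <= n) && (be %| n - al * x)) = ((x <= n %/ al) && (x %% be == X)).
Proof.
move=> a0 cab Xb HX.
rewrite leq_divRL // [(x * al)%N]mulnC.
case: (boolP (al * x <= n)%N) => //= h.
rewrite -eqn_mod_dvd // -HX mod_cancel // (modn_small Xb) eq_sym.
by [].
Qed.

Lemma count_formula (p q r s t : nat) (X : nat -> nat) :
  (0 < p)%N -> (0 < q)%N -> (0 < r)%N -> (0 < s)%N -> (0 < t)%N ->
  coprime (q * r) (s * p) -> (forall n, X n < s * p)%N ->
  (forall n, q * r * X n = n %[mod s * p])%N ->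
  lattice_count p q r s t =
  (\sum_(n < (t * (p * r)).+1) ((n %/ (q * r) + s * p - X n) %/ (s * p)))%N.
Proof.
move=> p0 q0 r0 s0 t0 cab Xlt Xc.
rewrite /lattice_count.
under eq_bigr => x _ do under eq_bigr => y _ do rewrite dil_eq // -ltnS -cnt1.
under eq_bigr => x _ do rewrite exchange_big.
rewrite exchange_big; apply: eq_bigr => n _.
rewrite (eq_bigr (fun x : 'I_(t * p).+1 =>
   ((q * r * x <= n) && (s * p %| n - q * r * x)) : nat)); last first.
  move=> x _; apply: inner_y; first by rewrite muln_gt0 s0.
  move=> y hy; have := ltn_ord n; rewrite -hy ltnS => hh.
  rewrite ltnS.
  have h1 : (p * (s * y) <= p * (t * r))%N.
    have : (s * p * y <= t * (p * r))%N by lia.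
    have -> : (p * (s * y) = s * p * y)%N by ring.
    by have -> : (p * (t * r) = t * (p * r))%N by ring.
  rewrite leq_pmul2l // in h1.
  exact: leq_trans (leq_pmull _ s0) h1.
under eq_bigr => x _ do rewrite (@cond_eq (q * r) (s * p) n x (X n) _ cab (Xlt n) (Xc n)) ?muln_gt0 ?q0 //.
apply: cntmod_le => //.
have := ltn_ord n; rewrite ltnS => hn.
have := leq_trunc_div n (q * r); rewrite ltnS; nia.
Qed.

Lemma coprime_rp (r p s k : nat) : (s * p + 1 = k * r)%N -> coprime r p.
Proof.
move=> h; rewrite /coprime -dvdn1.
have d1 : (gcdn r p %| k * r)%N by apply: dvdn_mull; apply: dvdn_gcdl.
rewrite -h dvdn_addr // in d1.
by apply: dvdn_mull; apply: dvdn_gcdr.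
Qed.

Unset Implicit Arguments.
Theorem corollary1p5 (p q r s : nat)
  (hp : (0 < p)%N) (hq : (0 < q)%N) (hr : (0 < r)%N) (hs : (0 < s)%N)
  (hqp : coprime q p) (hsr : coprime s r)
  (h1 : (s %| p)%N) (h2 : (p %| r * q + 1)%N)
  (h3 : coprime ((r * q + 1) %/ p) s)
  (h4 : (q %| r)%N) (h5 : (r %| s * p + 1)%N)
  (h6 : coprime ((s * p + 1) %/ r) q) :
  pseudo_integral p q r s.
Proof.
set k := ((r * q + 1) %/ p)%N; set k' := ((s * p + 1) %/ r)%N.
have hk : (q * r + 1 = k * p)%N by rewrite /k divnK // mulnC.
have hk' : (s * p + 1 = k' * r)%N by rewrite /k' divnK.
have cqs : coprime q s by rewrite coprime_sym (coprime_dvdr h4 hsr).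
have crp : coprime r p := coprime_rp hk'.
have cab : coprime (q * r) (s * p).
  by rewrite coprimeMl !coprimeMr cqs hqp crp coprime_sym hsr.
have cba : coprime (s * p) (q * r) by rewrite coprime_sym.
set X := Xd p s k; set Y := Xd r q k'.
have Xlt : forall n, (X n < s * p)%N by move=> n; apply: Xd_lt.
have Xc : forall n, (q * r * X n = n %[mod s * p])%N by move=> n; apply: Xd_cong.
have Ylt : forall n, (Y n < q * r)%N by move=> n; apply: Xd_lt.
have Yc : forall n, (s * p * Y n = n %[mod q * r])%N by move=> n; apply: Xd_cong.
pose al := (q * r)%N; pose be := (s * p)%N.
pose D := (2 * al * be)%N.
pose Ka := (al * (r * p * (p * s).-1) + be * (p * r * (r * q).-1))%N.
pose c2 := ((p * r) ^ 2)%N; pose c1 := (p * r + 2 * (p * r) * al * be)%N.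
exists (D%:R^-1 *: (c2%:R *: 'X^2 + (c1%:R - Ka%:R) *: 'X + (D%:R)%:P))%R.
move=> t t0.
rewrite (@count_formula p q r s t X) //.
set N := (t * (p * r))%N.
set L := (\sum_(n < N.+1) _)%N.
have per : forall n, ((q * r) * (s * p) * ((n %/ (q * r) + s * p - X n) %/ (s * p))
    + (q * r) * X n + (s * p) * Y n = n + (q * r) * (s * p))%N.
  by move=> n; apply: pern; rewrite ?muln_gt0 ?hq ?hr ?hs ?hp.
have H1 : ((q * r) * (s * p) * L + (q * r) * \sum_(n < N.+1) X n + (s * p) * \sum_(n < N.+1) Y n
          = \sum_(n < N.+1) n + N.+1 * ((q * r) * (s * p)))%N.
  rewrite /L !big_distrr -!big_split /=.
  rewrite (eq_bigr _ (fun (n : 'I_N.+1) _ => per n)) big_split /= sum_nat_const card_ord.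
  by [].
have SX : (2 * \sum_(n < N.+1) X n = N * (p * s).-1)%N.
  rewrite /N (_ : (t * (p * r) = t * r * p)%N); last by ring.
  by apply: sumX.
have SY : (2 * \sum_(n < N.+1) Y n = N * (r * q).-1)%N.
  rewrite /N (_ : (t * (p * r) = t * p * r)%N); last by ring.
  by apply: sumX.
have Sn : (2 * \sum_(n < N.+1) n = N.+1 * N)%N by rewrite sum_id2.
move: H1 SX SY Sn.
set SXv := (\sum_(n < N.+1) X n)%N; set SYv := (\sum_(n < N.+1) Y n)%N.
set Snv := (\sum_(n < N.+1) n)%N.
move=> H1 SX SY Sn.
move/(congr1 (fun x : nat => x%:R : rat)): H1; rewrite /= !(natrD, natrM) => H1.
move/(congr1 (fun x : nat => x%:R : rat)): SX; rewrite /= !(natrD, natrM) => SX.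
move/(congr1 (fun x : nat => x%:R : rat)): SY; rewrite /= !(natrD, natrM) => SY.
move/(congr1 (fun x : nat => x%:R : rat)): Sn; rewrite /= !(natrD, natrM) => Sn.
have nz : ((q * r * (s * p))%:R != 0 :> rat)%R.
  by rewrite pnatr_eq0 -lt0n !muln_gt0 hq hr hs hp.
have eL : (L%:R = (Snv%:R + N.+1%:R * (q * r * (s * p))%:R - (q * r)%:R * SXv%:R
            - (s * p)%:R * SYv%:R) / (q * r * (s * p))%:R :> rat)%R.
  apply: (mulIf nz); rewrite mulfVK //.
  rewrite !natrM -H1; ring.
have eX : (SXv%:R = (t%:R * (p%:R * r%:R) * (p * s).-1%:R) / 2 :> rat)%R.
  by rewrite -SX; field.
have eY : (SYv%:R = (t%:R * (p%:R * r%:R) * (r * q).-1%:R) / 2 :> rat)%R.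
  by rewrite -SY; field.
have eN : (Snv%:R = (N.+1%:R * (t%:R * (p%:R * r%:R))) / 2 :> rat)%R.
  by rewrite -Sn; field.
rewrite eL eX eY eN hornerZ !hornerD !hornerZ hornerXn hornerX hornerC.
rewrite /D /c1 /c2 /Ka /al /be /N -addn1 !(natrD, natrM, natrX).
have hp' : (p%:R != 0 :> rat)%R by rewrite pnatr_eq0 -lt0n.
have hq' : (q%:R != 0 :> rat)%R by rewrite pnatr_eq0 -lt0n.
have hr' : (r%:R != 0 :> rat)%R by rewrite pnatr_eq0 -lt0n.
have hs' : (s%:R != 0 :> rat)%R by rewrite pnatr_eq0 -lt0n.
move: hp' hq' hr' hs'.
generalize ((p * s).-1%:R : rat) ((r * q).-1%:R : rat) (t%:R : rat) (p%:R : rat) (q%:R : rat) (r%:R : rat) (s%:R : rat).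
move=> A B T P Q R S hP hQ hR hS.
field.
by rewrite !pnatr_eq0 -!lt0n hp hs hr hq.
Qed.
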